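(* Let \((Q, \preccurlyeq_Q)\) and \((L, \preccurlyeq_L)\) be posets with smallest elements \(q_0 \in Q\) and \(l_0 \in L\). Then the following conditions are equivalent for every mapping \(f \colon Q \to L\). (i) For every nonempty set \(X\), \(f \circ d\) is an \(L\)-ultrametric whenever \(d\colon X^2\to Q\) is a \(Q\)-ultrametric. (ii) \(f\) is isotone and, for every \(q \in Q\), \(f(q) = l_0\) holds if and only if \(q = q_0\).
   Context: For a poset \((P,\preccurlyeq_P)\) with smallest element \(p_0\) and a nonempty set \(X\), \(d\colon X^2\to P\) is a \(P\)-pseudoultrametric if \(d\) is symmetric, \(d(x,x)=p_0\) for all \(x\), and for every triple \(\langle x_1,x_2,x_3\rangle\) in \(X\) there is a permutation \((i_1,i_2,i_3)\) of \((1,2,3)\) with \(d(x_{i_1},x_{i_3})\preccurlyeq_P d(x_{i_1},x_{i_2})\) and \(d(x_{i_1},x_{i_2})=d(x_{i_2},x_{i_3})\); it is a \(P\)-ultrametric if moreover \(d(x,y)=p_0\) iff \(x=y\). A map \(f\colon Q\to L\) is isotone if \(q_1\preccurlyeq_Q q_2\) implies \(f(q_1)\preccurlyeq_L f(q_2)\). *)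

(* Defs.v *)
(* posets with a smallest element are [bPOrderType]s,
   the smallest element is [\bot]. *)
From HB Require Import structures.
From mathcomp Require Import all_boot all_order.
Set Implicit Arguments. Unset Strict Implicit. Unset Printing Implicit Defensive.
Import Order.Theory.
Local Open Scope order_scope.

Definition ultra_triple {disp : Order.disp_t} {P : bPOrderType disp} {X : Type}
  (d : X -> X -> P) (a b c : X) : Prop :=
  d a c <= d a b /\ d a b = d b c.

Definition pseudoultrametric {disp : Order.disp_t} {P : bPOrderType disp} {X : Type}
  (d : X -> X -> P) : Prop :=
  (forall x y, d x y = d y x) /\
  (forall x, d x x = \bot) /\
  (forall x1 x2 x3 : X,
     ultra_triple d x1 x2 x3 \/ ultra_triple d x1 x3 x2 \/
     ultra_triple d x2 x1 x3 \/ ultra_triple d x2 x3 x1 \/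
     ultra_triple d x3 x1 x2 \/ ultra_triple d x3 x2 x1).

Definition ultrametric {disp : Order.disp_t} {P : bPOrderType disp} {X : Type}
  (d : X -> X -> P) : Prop :=
  pseudoultrametric d /\ (forall x y, d x y = \bot <-> x = y).

Definition isotone {dQ dL : Order.disp_t} {Q : porderType dQ} {L : porderType dL}
  (f : Q -> L) : Prop :=
  forall q1 q2 : Q, q1 <= q2 -> f q1 <= f q2.

(* Main.v *)
Require Import Defs.
From HB Require Import structures.
From mathcomp Require Import all_boot all_order.
Local Open Scope order_scope.
Import Order.Theory.

Inductive T3 := A3 | B3 | C3.

Definition d3 {dQ : Order.disp_t} {Q : bPOrderType dQ} (q1 q2 : Q) (x y : T3) : Q :=
  match x, y with
  | A3, A3 | B3, B3 | C3, C3 => \bot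
  | A3, B3 | B3, A3 => q1
  | _, _ => q2
  end.

Ltac tri := split; [ first [ exact: lexx | exact: le0x | assumption ] | reflexivity ].
Ltac try6 := first [ left; tri | right; left; tri | right; right; left; tri
  | right; right; right; left; tri | right; right; right; right; left; tri
  | right; right; right; right; right; tri ].

Lemma d3_ultra {dQ : Order.disp_t} {Q : bPOrderType dQ} (q1 q2 : Q) :
  q1 <= q2 -> q1 <> \bot -> q2 <> \bot -> ultrametric (d3 q1 q2).
Proof.
move=> le n1 n2; split; [split; [|split]|].
- by case; case.
- by case.
- by case; case; case; rewrite /ultra_triple /=; try6.
- case; case; split => //= H; try (by case: (n1 H)); by case: (n2 H).
Qed.

Theorem corollary3p25 (dQ dL : Order.disp_t) (Q : bPOrderType dQ) (L : bPOrderType dL)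
  (f : Q -> L) :
  (forall (X : Type), inhabited X ->
     forall d : X -> X -> Q, ultrametric d -> ultrametric (fun x y => f (d x y)))
  <->
  (isotone f /\ (forall q : Q, f q = \bot <-> q = \bot)).
Proof.
split.
- move=> H.
  have fb : f \bot = \bot.
    have U : ultrametric (fun _ _ : unit => (\bot : Q)).
      split; [split; [|split]|] => //.
      - by move=> *; left; split; [exact: lexx|].
      - by move=> [] [].
    by case: (H unit (inhabits tt) _ U) => [[_ [D _]] _]; apply: D tt.
  have nz : forall q : Q, q <> \bot -> f q <> \bot.
    move=> q nq fq.
    case: (H T3 (inhabits A3) _ (d3_ultra q q (lexx q) nq nq)) => _ Z.
    by have := (proj1 (Z A3 B3)) fq.
  split.
  + move=> q1 q2 le.
    case: (eqVneq q1 \bot) => [->|n1]; first by rewrite fb le0x.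
    have n2 : q2 != \bot.
      apply/negP => /eqP e; move: le; rewrite e le_eqVlt ltx0 orbF => /eqP e1.
      by rewrite e1 eqxx in n1.
    case: (H T3 (inhabits A3) _ (d3_ultra q1 q2 le (elimN eqP n1) (elimN eqP n2)))
      => [[_ [_ T]] _].
    case: (T A3 B3 C3); rewrite /ultra_triple /=;
      [case=> a b|case=> [[a b]|[[a b]|[[a b]|[[a b]|[a b]]]]]] => //;
      by rewrite ?b ?a.
  + move=> q; split; last by move=> ->.
    move=> fq; case: (eqVneq q \bot) => [//|/eqP nq]; by case: (nz q nq fq).
- move=> [iso Z] X _ d [[S [D T]] Zd]; split; [split; [|split]|].
  + by move=> x y; rewrite S.
  + by move=> x; rewrite D; apply/Z.
  + move=> x1 x2 x3; rewrite /ultra_triple.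
    case: (T x1 x2 x3) => [[a b]|[[a b]|[[a b]|[[a b]|[[a b]|[a b]]]]]];
      [left|right;left|right;right;left|right;right;right;left
      |right;right;right;right;left|right;right;right;right;right];
      by split; [apply: iso|rewrite b].
  + move=> x y; split => [/Z /Zd //|/Zd /Z //].
Qed.
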